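(* Let $n\ge0$ and $\mathbf{x}\in\mathbb{R}^{n+1}$ with $0\le\mathbf{x}_0<\dots<\mathbf{x}_n\le1$. Then $$\kappa_{M^n\to2}\big(V^n(\mathbf{x})\big)\le(n+1)^{3/2}\,\|\mathbf{w}^n\|_2.$$
   Context: $B^n_j(x)=\binom{n}{j}x^j(1-x)^{n-j}$; $V^n(\mathbf{x})$ is the Bernstein–Vandermonde matrix $V^n_{ij}(\mathbf{x})=B^n_j(\mathbf{x}_i)$. $M^n_{ij}=\int_0^1B^n_i(x)B^n_j(x)\,dx$ is the Bernstein mass matrix, $\|\mathbf{y}\|_{M^n}=\sqrt{\mathbf{y}^TM^n\mathbf{y}}$, $\|A\|_{M^n\to2}=\max_{\mathbf{y}\ne0}\|A\mathbf{y}\|_2/\|\mathbf{y}\|_{M^n}$, $\|A\|_{2\to M^n}=\max_{\mathbf{y}\ne0}\|A\mathbf{y}\|_{M^n}/\|\mathbf{y}\|_2$, and $\kappa_{M^n\to2}(A)=\|A\|_{M^n\to2}\|A^{-1}\|_{2\to M^n}$. For $0\le j\le n$, $\ell^{j,n}(x)=\prod_{i\ne j}\frac{x-\mathbf{x}_i}{\mathbf{x}_j-\mathbf{x}_i}$ is the $j$-th Lagrange polynomial for the nodes $\mathbf{x}$, and $\mathbf{w}^n\in\mathbb{R}^{n+1}$ has entries $\mathbf{w}^n_j=\|\ell^{j,n}\|_{L^2(0,1)}$. *)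

(* Defs.v *)
From mathcomp Require Import all_boot all_order all_algebra.
From mathcomp Require Import all_classical all_reals all_analysis.
Set Implicit Arguments. Unset Strict Implicit. Unset Printing Implicit Defensive.
Import Order.TTheory GRing.Theory Num.Theory.
Local Open Scope ring_scope.
Local Open Scope classical_set_scope.

Section Defs.
Variable R : realType.

Definition bernstein (n j : nat) (t : R) : R :=
  ('C(n, j))%:R * t ^+ j * (1 - t) ^+ (n - j).

Definition bernVander (n : nat) (x : 'I_n.+1 -> R) : 'M[R]_n.+1 :=
  \matrix_(i, j) bernstein n j (x i).

Definition int01 (f : R -> R) : R :=
  Rintegral (@lebesgue_measure R) `[0%R, 1%R] f.

Definition massmx (n : nat) : 'M[R]_n.+1 :=
  \matrix_(i, j) int01 (fun t => bernstein n i t * bernstein n j t).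

Definition norm2 (m : nat) (y : 'cV[R]_m) : R :=
  Num.sqrt (\sum_i y i 0 ^+ 2).

Definition normM (n : nat) (y : 'cV[R]_n.+1) : R :=
  Num.sqrt ((y^T *m massmx n *m y) 0 0).

Definition opnorm_M2 (n : nat) (A : 'M[R]_n.+1) : R :=
  sup [set r | exists y : 'cV[R]_n.+1, y != 0 /\ r = norm2 (A *m y) / normM y].

Definition opnorm_2M (n : nat) (A : 'M[R]_n.+1) : R :=
  sup [set r | exists y : 'cV[R]_n.+1, y != 0 /\ r = normM (A *m y) / norm2 y].

Definition kappa_M2 (n : nat) (A : 'M[R]_n.+1) : R :=
  opnorm_M2 A * opnorm_2M (invmx A).

Definition lagrange (n : nat) (x : 'I_n.+1 -> R) (j : 'I_n.+1) (t : R) : R :=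
  \prod_(i < n.+1 | i != j) ((t - x i) / (x j - x i)).

Definition wvec (n : nat) (x : 'I_n.+1 -> R) : 'cV[R]_n.+1 :=
  \col_j Num.sqrt (int01 (fun t => lagrange x j t ^+ 2)).

End Defs.

(* Main.v *)
Require Import Defs.
From mathcomp Require Import all_boot all_order all_algebra.
From mathcomp Require Import all_classical all_reals all_analysis.
From mathcomp Require Import ring lra.
Import Order.TTheory GRing.Theory Num.Theory.
Local Open Scope ring_scope.
Set Implicit Arguments. Unset Strict Implicit. Unset Printing Implicit Defensive.
Import numFieldNormedType.Exports.
From mathcomp Require Import zify.

Section S_a.
Variable R : realType.
Implicit Types p q : {poly R}.

Definition prim p : {poly R} :=
  \poly_(i < (size p).+1) (if i is k.+1 then p`_k / k.+1%:R else 0).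

Lemma coef_prim p i : (prim p)`_i = if i is k.+1 then p`_k / k.+1%:R else 0.
Proof.
rewrite coef_poly; case: i => [|k]; first by case: (ltnP 0 _).
case: (ltnP k.+1 (size p).+1) => // H.
by rewrite nth_default ?mul0r.
Qed.

Lemma deriv_prim p : (prim p)^`() = p.
Proof.
apply/polyP => i; rewrite coef_deriv coef_prim -[_ *+ _]mulr_natr divfK //.
Qed.

Definition Iab p (a b : R) := (prim p).[b] - (prim p).[a].

Lemma int01_poly p : int01 (horner p) = Iab p 0 1.
Proof.
rewrite /int01 /Rintegral (@continuous_FTC2 _ _ (horner (prim p))) //.
- by apply: continuous_subspaceT => x; exact: continuous_horner.
- split.
  + by move=> x _; exact: derivable_horner.
  + by apply: cvg_at_right_filter; exact: continuous_horner.
  + by apply: cvg_at_left_filter; exact: continuous_horner.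
- by move=> x _; rewrite -derivE deriv_prim.
Qed.

Lemma Ipos p : 0 <= Iab (p * p) 0 1.
Proof.
have h : forall t : R, 0 <= (p * p).[t] by move=> t; rewrite hornerM -expr2 sqr_ge0.
rewrite -int01_poly /int01; apply: Rintegral_ge0 => t _; exact: h.
Qed.
End S_a.

Section S_b.
Variable R : realType.
Implicit Types p q : {poly R}.

Lemma primD p q : prim (p + q) = prim p + prim q.
Proof. by apply/polyP => i; rewrite coefD !coef_prim; case: i => [|k]; rewrite ?addr0 // coefD mulrDl. Qed.

Lemma primZ (c : R) p : prim (c *: p) = c *: prim p.
Proof. by apply/polyP => i; rewrite coefZ !coef_prim; case: i => [|k]; rewrite ?mulr0 // coefZ mulrA. Qed.

Lemma prim0 : prim (0 : {poly R}) = 0.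
Proof. by apply/polyP => i; rewrite coef0 coef_prim; case: i => // k; rewrite coef0 mul0r. Qed.

Lemma IabD p q a b : Iab (p + q) a b = Iab p a b + Iab q a b.
Proof. by rewrite /Iab primD !hornerD; ring. Qed.

Lemma IabZ (c : R) p a b : Iab (c *: p) a b = c * Iab p a b.
Proof. by rewrite /Iab primZ !hornerZ; ring. Qed.

Lemma Iab0 (a b : R) : Iab 0 a b = 0.
Proof. by rewrite /Iab prim0 !horner0 subrr. Qed.

Lemma Iab_sum (I : Type) (r : seq I) (P : pred I) (F : I -> {poly R}) (a b : R) :
  Iab (\sum_(i <- r | P i) F i) a b = \sum_(i <- r | P i) Iab (F i) a b.
Proof. exact: (big_morph (fun p => Iab p a b) (fun p q => IabD p q a b) (Iab0 a b)). Qed.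

Lemma deriv0_const p : p^`() = 0 -> p = (p`_0)%:P.
Proof.
move=> H; apply/polyP => i; rewrite coefC; case: i => [|k] //=.
have := congr1 (fun q : {poly R} => q`_k) H; rewrite coef_deriv coef0.
by move/eqP; rewrite mulrn_eq0 /= => /eqP.
Qed.

Lemma Iab_deriv p q a b : q^`() = p -> Iab p a b = q.[b] - q.[a].
Proof.
move=> H; have : (q - prim p)^`() = 0 by rewrite derivB deriv_prim H subrr.
move/deriv0_const => E.
have Eq : q = prim p + ((q - prim p)`_0)%:P by rewrite -E addrC subrK.
by rewrite /Iab [in RHS]Eq !hornerD !hornerC; ring.
Qed.

Lemma Iab_comp p (a c u v : R) :
  Iab (p \Po (a%:P + c *: 'X)) u v * c = Iab p (a + c * u) (a + c * v).
Proof.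
set L := a%:P + c *: 'X.
have dL : L^`() = c%:P by rewrite /L derivD derivC derivZ derivX add0r alg_polyC.
have : (prim p \Po L)^`() = c *: (p \Po L).
  by rewrite deriv_comp deriv_prim dL mulrC mul_polyC.
move/Iab_deriv => H; rewrite -[Iab (p \Po L) u v * c]mulrC -IabZ (H u v).
by rewrite !horner_comp /L !hornerE /Iab.
Qed.

Lemma Iab_Xn k : Iab ('X^k : {poly R}) 0 1 = (k.+1%:R)^-1.
Proof.
rewrite (@Iab_deriv _ ((k.+1%:R)^-1 *: 'X^(k.+1))).
  by rewrite !hornerZ !hornerXn expr1n expr0n /= mulr0 subr0 mulr1.
rewrite derivZ derivXn /=; have -> : ('X^k *+ k.+1 : {poly R}) = k.+1%:R *: 'X^k by rewrite scaler_nat.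
rewrite scalerA mulVf ?scale1r //.
Qed.
End S_b.

Section S_c.
Variable R : realType.
Implicit Types p q : {poly R}.

Lemma interp_uniq k p q (s : 'I_k -> R) : injective s ->
  (size p <= k)%N -> (size q <= k)%N -> (forall i, p.[s i] = q.[s i]) -> p = q.
Proof.
move=> inj sp sq E; apply/eqP; rewrite -subr_eq0; apply/eqP.
apply: (@roots_geq_poly_eq0 _ _ [seq s i | i <- enum 'I_k]).
- by apply/allP => z /mapP [i _ ->]; rewrite rootE !hornerE E subrr.
- by rewrite map_inj_uniq ?enum_uniq.
- rewrite size_map size_enum_ord; apply: (leq_trans (size_polyD _ _)).
  by rewrite size_polyN geq_max sp sq.
Qed.

Variable n : nat.

Definition rr (j : 'I_n.+1) : R := - (j.+1%:R).
Definition Dp : {poly R} := \prod_(j < n.+1) ('X - (rr j)%:P).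
Definition Pp : {poly R} := \prod_(j < n.+1) ('X - ((j : nat)%:R)%:P).
Definition Np := Dp - Pp.
Definition Lb (i : 'I_n.+1) : {poly R} := \prod_(j < n.+1 | j != i) ('X - (rr j)%:P).
Definition cc (i : 'I_n.+1) : R := Np.[rr i] / \prod_(j < n.+1 | j != i) (rr i - rr j).

Lemma prod_seqE (F : 'I_n.+1 -> R) :
  \prod_(j < n.+1) ('X - (F j)%:P) = \prod_(a <- [seq F j | j <- enum 'I_n.+1]) ('X - a%:P).
Proof. by rewrite big_map enumT. Qed.

Lemma sum_seqE (F : 'I_n.+1 -> R) :
  \sum_(a <- [seq F j | j <- enum 'I_n.+1]) a = \sum_(j < n.+1) F j.
Proof. by rewrite big_map enumT. Qed.

Lemma size_prodF (F : 'I_n.+1 -> R) : size (\prod_(j < n.+1) ('X - (F j)%:P)) = n.+2.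
Proof. by rewrite prod_seqE size_prod_XsubC size_map size_enum_ord. Qed.

Lemma lead_prodF (F : 'I_n.+1 -> R) : (\prod_(j < n.+1) ('X - (F j)%:P))`_n.+1 = 1.
Proof.
have := lead_coef_prod_XsubC (index_enum 'I_n.+1) xpredT F.
by rewrite /lead_coef size_prodF.
Qed.

Lemma coefn_prodF (F : 'I_n.+1 -> R) :
  (\prod_(j < n.+1) ('X - (F j)%:P))`_n = - \sum_(j < n.+1) F j.
Proof.
rewrite prod_seqE -sum_seqE.
have := @coefPn_prod_XsubC _ [seq F j | j <- enum 'I_n.+1].
by rewrite size_map size_enum_ord => ->.
Qed.

Lemma size_Np : (size Np <= n.+1)%N.
Proof.
apply/leq_sizeP => j; rewrite leq_eqVlt => /orP [/eqP <-|hj].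
  by rewrite coefB /Dp /Pp !lead_prodF subrr.
rewrite coefB !nth_default ?subrr // /Dp /Pp size_prodF //.
Qed.

Lemma coefn_Np : Np`_n = (n.+1%:R) ^+ 2.
Proof.
rewrite coefB /Dp /Pp !coefn_prodF /rr sumrN !opprK -big_split /=.
elim: (n.+1) => [|k IH]; first by rewrite big_ord0 expr0n.
rewrite big_ord_recr /= IH -!natrX -!natrD; apply/eqP; rewrite eqr_nat; apply/eqP.
rewrite !expnS !expn0; lia.
Qed.

Lemma Dp_split i : Dp = ('X - (rr i)%:P) * Lb i.
Proof. by rewrite /Dp (bigD1 i). Qed.

Lemma Lb_monic i : Lb i \is monic.
Proof. exact: monic_prod_XsubC. Qed.

Lemma size_Lb i : size (Lb i) = n.+1.
Proof.
have := size_prodF rr; rewrite -/Dp (Dp_split i) size_monicM ?monicXsubC ?monic_neq0 ?Lb_monic //.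
by rewrite size_XsubC /= => [[]].
Qed.

Lemma coef_Lb i : (Lb i)`_n = 1.
Proof. by have /monicP := Lb_monic i; rewrite /lead_coef size_Lb. Qed.

Lemma rr_inj : injective rr.
Proof.
move=> i j; rewrite /rr => /oppr_inj/eqP; rewrite eqr_nat eqSS => /eqP h.
exact: val_inj.
Qed.

Lemma Lb_eval_off i k : k != i -> (Lb i).[rr k] = 0.
Proof. by move=> ki; rewrite /Lb horner_prod (bigD1 k) //= hornerXsubC subrr mul0r. Qed.

Lemma Lb_eval_on i : (Lb i).[rr i] = \prod_(j < n.+1 | j != i) (rr i - rr j).
Proof. by rewrite /Lb horner_prod; apply: eq_bigr => j _; rewrite hornerXsubC. Qed.

Lemma prodrr_neq0 i : \prod_(j < n.+1 | j != i) (rr i - rr j) != 0.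
Proof.
apply/prodf_neq0 => j hj; rewrite subr_eq0; apply: contra hj => /eqP h.
by rewrite (rr_inj h).
Qed.

Lemma Np_interp : Np = \sum_(i < n.+1) cc i *: Lb i.
Proof.
apply: (@interp_uniq n.+1 _ _ rr rr_inj size_Np).
  apply/leq_sizeP => j hj; rewrite coef_sum big1 // => i _.
  by rewrite coefZ nth_default ?mulr0 // size_Lb.
move=> k; rewrite horner_sum (bigD1 k) //= big1 ?addr0.
  by rewrite hornerZ Lb_eval_on /cc divfK // prodrr_neq0.
by move=> i ik; rewrite hornerZ Lb_eval_off ?mulr0 // eq_sym.
Qed.

Lemma sum_cc : \sum_(i < n.+1) cc i = (n.+1%:R) ^+ 2.
Proof.
rewrite -coefn_Np Np_interp coef_sum; apply: eq_bigr => i _.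
by rewrite coefZ coef_Lb mulr1.
Qed.

Lemma m_rr_gt0 (m : nat) i : 0 < m%:R - rr i.
Proof. by rewrite /rr opprK -natrD ltr0n addnS. Qed.

Lemma Dp_m_neq0 (m : nat) : Dp.[m%:R] != 0.
Proof.
rewrite /Dp horner_prod; apply/prodf_neq0 => j _.
by rewrite hornerXsubC gt_eqF // m_rr_gt0.
Qed.

Lemma Pp_m (m : nat) : (m <= n)%N -> Pp.[m%:R] = 0.
Proof.
move=> hm; rewrite /Pp horner_prod (bigD1 (Ordinal (hm : (m < n.+1)%N))) //=.
by rewrite hornerXsubC subrr mul0r.
Qed.

Lemma reproduce (m : nat) : (m <= n)%N ->
  \sum_(i < n.+1) cc i / (m%:R - rr i) = 1.
Proof.
move=> hm; have h := congr1 (fun p => p.[m%:R]) Np_interp.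
rewrite /= /Np hornerD hornerN Pp_m // subr0 horner_sum in h.
have E i : (Lb i).[m%:R] = Dp.[m%:R] / (m%:R - rr i).
  rewrite (Dp_split i) hornerM hornerXsubC mulrC mulKf //.
  by rewrite gt_eqF // m_rr_gt0.
have h2 : Dp.[m%:R] = Dp.[m%:R] * \sum_(i < n.+1) cc i / (m%:R - rr i).
  by rewrite {1}h mulr_sumr; apply: eq_bigr => i _; rewrite hornerZ E mulrCA.
by apply: (mulfI (Dp_m_neq0 m)); rewrite mulr1 -h2.
Qed.
End S_c.

Section S_d.
Variable R : realType.
Implicit Types p q : {poly R}.
Variable n : nat.

Definition KK : {poly R} := \sum_(i < n.+1) @cc R n i *: 'X^i.
Local Notation I p := (Iab p 0 1).

Lemma IabN p (a b : R) : Iab (- p) a b = - Iab p a b.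
Proof. by rewrite -scaleN1r IabZ mulN1r. Qed.

Lemma I_XmK m : (m <= n)%N -> I ('X^m * KK) = 1.
Proof.
move=> hm; rewrite -[RHS](@reproduce R n m hm) /KK mulr_sumr Iab_sum; apply: eq_bigr => i _.
rewrite -scalerAr IabZ -exprD. rewrite Iab_Xn /rr opprK -natrD addnS.
by [].
Qed.

Lemma poly_expand p : (size p <= n.+1)%N -> p = \sum_(m < n.+1) p`_m *: 'X^m.
Proof.
move=> sp; rewrite -poly_def; apply/polyP => k; rewrite coef_poly.
by case: ltnP => // h; rewrite nth_default // (leq_trans sp h).
Qed.

Lemma size_KK : (size KK <= n.+1)%N.
Proof.
apply/leq_sizeP => j hj; rewrite coef_sum big1 // => i _.
rewrite coefZ coefXn; case: eqP => [e|]; last by rewrite mulr0.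
by move: (ltn_ord i); rewrite -e ltnNge hj.
Qed.

Lemma horner1_expand p : (size p <= n.+1)%N -> p.[1] = \sum_(m < n.+1) p`_m.
Proof.
move=> sp; rewrite {1}(poly_expand sp) horner_sum; apply: eq_bigr => i _.
by rewrite hornerZ hornerXn expr1n mulr1.
Qed.

Lemma I_pK p : (size p <= n.+1)%N -> I (p * KK) = p.[1].
Proof.
move=> sp; rewrite (horner1_expand sp) {1}(poly_expand sp) mulr_suml Iab_sum.
apply: eq_bigr => i _; rewrite -scalerAl IabZ I_XmK ?mulr1 //.
by have := ltn_ord i.
Qed.

Lemma I_KK : I (KK * KK) = (n.+1%:R) ^+ 2.
Proof.
rewrite I_pK ?size_KK // (horner1_expand size_KK) -(@sum_cc R n).
apply: eq_bigr => i _; rewrite /KK coef_sum (bigD1 i) //= big1 ?addr0.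
  by rewrite coefZ coefXn eqxx mulr1.
by move=> j ji; rewrite coefZ coefXn; case: eqP => [e|]; [move: ji; rewrite (val_inj e) eqxx | rewrite mulr0].
Qed.

Hypothesis Hpos : forall f : {poly R}, 0 <= I (f * f).

Lemma E1 p : (size p <= n.+1)%N -> p.[1] ^+ 2 <= (n.+1%:R) ^+ 2 * I (p * p).
Proof.
move=> sp; set s : R := (n.+1%:R) ^+ 2; set a := p.[1].
have hs : 0 < s by rewrite /s exprn_gt0 // ltr0n.
set c := a / s.
have hc : c * s = a by rewrite /c divfK // gt_eqF.
have e : (p - c *: KK) * (p - c *: KK) =
    p * p - c *: (p * KK) - c *: (p * KK) + (c * c) *: (KK * KK).
  by rewrite -!mul_polyC polyCM; ring.
have := Hpos (p - c *: KK); rewrite e !IabD !IabN !IabZ I_pK // I_KK -/s -/a => h.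
nra.
Qed.

Lemma size_comp_lin p (a b : R) : (size p <= n.+1)%N ->
  (size (p \Po (a%:P + b *: 'X)) <= n.+1)%N.
Proof.
move=> sp; apply: (leq_trans (size_comp_poly_leq _ _)).
have hL : ((size (a%:P + b *: 'X)%R).-1 <= 1)%N.
  have := size_polyD a%:P (b *: 'X).
  have := size_polyC_leq1 a; have := size_scale_leq b ('X : {poly R}).
  rewrite size_polyX => h1 h2 h3; have h1' : (size (b *: ('X : {poly R})) <= 2)%N by exact: h1.
  lia.
have := leq_mul (leqnn (size p).-1) hL; rewrite muln1; lia.
Qed.

Lemma step1 p t : (size p <= n.+1)%N -> 0 <= t ->
  p.[t] ^+ 2 * t <= (n.+1%:R) ^+ 2 * Iab (p * p) 0 t.
Proof.
move=> sp ht; set q := p \Po (0%:P + t *: 'X).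
have hq : q.[1] = p.[t] by rewrite /q horner_comp !hornerE.
have := E1 (size_comp_lin 0 t sp); rewrite hq -comp_polyM => h.
have := Iab_comp (p * p) 0 t 0 1; rewrite mulr0 mulr1 !add0r => <-.
move: h; rewrite polyC0 add0r => h.
by rewrite mulrA; apply: ler_wpM2r.
Qed.

Lemma pt_bound p t : (size p <= n.+1)%N -> 0 <= t <= 1 ->
  p.[t] ^+ 2 <= (n.+1%:R) ^+ 2 * I (p * p).
Proof.
move=> sp /andP [t0 t1].
have h1 := step1 sp t0.
set q := p \Po (1%:P + (-1) *: 'X).
have hq : q.[1 - t] = p.[t] by rewrite /q horner_comp !hornerE; congr (p.[_]); ring.
have t1' : 0 <= 1 - t by rewrite subr_ge0.
have h2 := step1 (size_comp_lin 1 (-1) sp) t1'.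
rewrite hq -comp_polyM in h2.
have E := Iab_comp (p * p) 1 (-1) 0 (1 - t).
have a1 : 1 + -1 * (1 - t) = t :> R by ring.
have a0 : 1 + -1 * 0 = 1 :> R by ring.
rewrite a1 a0 in E.
have E2 : Iab ((p * p) \Po (1%:P + (-1) *: 'X)) 0 (1 - t) = Iab (p * p) t 1.
  by move: E; rewrite /Iab => E; lra.
rewrite E2 in h2.
have -> : I (p * p) = Iab (p * p) 0 t + Iab (p * p) t 1 by rewrite /Iab; ring.
nra.
Qed.
End S_d.

Section S_e.
Variable R : realType.
Implicit Types p q : {poly R}.
Variable n : nat.

Lemma size_sum_le k m (F : 'I_k -> {poly R}) :
  (forall i, (size (F i) <= m)%N) -> (size (\sum_(i < k) F i)%R <= m)%N.
Proof.
move=> h; apply/leq_sizeP => j hj; rewrite coef_sum big1 // => i _.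
by rewrite nth_default // (leq_trans (h i) hj).
Qed.

Definition bpoly (j : nat) : {poly R} := ('C(n, j))%:R *: ('X^j * (1 - 'X) ^+ (n - j)).

Lemma bpolyE j t : (bpoly j).[t] = bernstein n j t.
Proof. by rewrite /bpoly /bernstein !hornerE. Qed.

Lemma size_1X : size (1 - 'X : {poly R}) = 2.
Proof. by rewrite -opprB size_polyN -polyC1 size_XsubC. Qed.

Lemma size_bpoly (j : 'I_n.+1) : (size (bpoly j) <= n.+1)%N.
Proof.
apply: (leq_trans (size_scale_leq _ _)); apply: (leq_trans (size_polyMleq _ _)).
set q : {poly R} := (1 - 'X) ^+ (n - j).
have hq : (size q).-1 = (n - j)%N by rewrite /q size_exp size_1X mul1n.
rewrite size_polyXn; have := ltn_ord j; lia.
Qed.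

Lemma coef_bpoly_low (j k : nat) : (k < j)%N -> (bpoly j)`_k = 0.
Proof. by move=> h; rewrite coefZ coefXnM h mulr0. Qed.

Lemma coef_bpoly_diag (j : nat) : (bpoly j)`_j = ('C(n, j))%:R.
Proof.
rewrite coefZ coefXnM ltnn subnn -horner_coef0 hornerE.
by rewrite !hornerE subr0 expr1n mulr1.
Qed.

Lemma bern_indep (c : 'I_n.+1 -> R) :
  \sum_(j < n.+1) c j *: bpoly j = 0 -> forall j, c j = 0.
Proof.
move=> H.
suff S : forall k (j : 'I_n.+1), (j < k)%N -> c j = 0 by move=> j; apply: (S n.+1).
elim=> [//|k IH] j hj.
case: (ltnP j k) => [/IH //|hjk].
have ejk : nat_of_ord j = k by lia.
have := congr1 (fun p => p`_k) H; rewrite coef_sum coef0 (bigD1 j) //= big1 ?addr0.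
  rewrite coefZ -ejk coef_bpoly_diag => /eqP; rewrite mulf_eq0 pnatr_eq0.
  have hC : ('C(n, j) == 0%N) = false by apply/negbTE; rewrite -lt0n bin_gt0 -ltnS ltn_ord.
  by rewrite hC orbF => /eqP.
move=> i ij; rewrite coefZ.
case: (ltnP i k) => [/IH -> |hik]; first by rewrite mul0r.
rewrite coef_bpoly_low ?mulr0 //.
have : nat_of_ord i != nat_of_ord j by [].
lia.
Qed.

Variable x : 'I_n.+1 -> R.
Hypothesis hinc : forall i j : 'I_n.+1, (i < j)%N -> x i < x j.

Lemma x_inj : injective x.
Proof.
move=> i j e; apply/eqP; case: (ltngtP i j) => [h|h|/val_inj -> //].
  by have := hinc h; rewrite e ltxx.
by have := hinc h; rewrite e ltxx.
Qed.

Definition pc (c : 'cV[R]_n.+1) : {poly R} := \sum_(j < n.+1) c j 0 *: bpoly j.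

Lemma size_pc c : (size (pc c) <= n.+1)%N.
Proof. by apply: size_sum_le => i; apply: (leq_trans (size_scale_leq _ _)); exact: size_bpoly. Qed.

Lemma V_mul c i : (bernVander x *m c) i 0 = (pc c).[x i].
Proof.
rewrite !mxE /pc horner_sum; apply: eq_bigr => j _.
by rewrite mxE hornerZ bpolyE mulrC.
Qed.

Lemma V_unit : bernVander x \in unitmx.
Proof.
rewrite -unitmx_tr -row_free_unit -kermx_eq0.
apply: contraT => /rowV0Pn [v /sub_kermxP h vnz].
have hV : bernVander x *m v^T = 0 by rewrite -(trmxK (bernVander x)) -trmx_mul h trmx0.
have hp : pc v^T = 0.
  apply: (@interp_uniq R n.+1 _ _ x x_inj (size_pc _)); first by rewrite size_poly0.
  by move=> i; rewrite -V_mul hV mxE horner0.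
have := bern_indep hp => h0.
case/eqP: vnz; apply/matrixP => i j.
by rewrite (ord1 i) [RHS]mxE; have := h0 j; rewrite mxE.
Qed.
End S_e.

Section S_f.
Variable R : realType.
Implicit Types p q : {poly R}.

Lemma quad_cs (A B C : R) : 0 <= A -> 0 <= C ->
  (forall s t, 0 <= s ^+ 2 * A + 2 * s * t * B + t ^+ 2 * C) -> B ^+ 2 <= A * C.
Proof.
move=> hA hC h.
have [C0|] := ltP 0 C.
  have := h C (- B); nra.
rewrite le_eqVlt ltNge hC orbF => /eqP C0; subst C.
have := h (2 * B) (- (A + 1)); nra.
Qed.

Lemma abs_le_sqrt (A B C : R) : 0 <= A -> 0 <= C -> B ^+ 2 <= A * C ->
  `|B| <= Num.sqrt A * Num.sqrt C.
Proof.
move=> hA hC h; rewrite -sqrtrM // -sqrtr_sqr; exact: ler_wsqrtr.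
Qed.

Lemma I_cs p q : `|Iab (p * q) 0 1| <=
  Num.sqrt (Iab (p * p) 0 1) * Num.sqrt (Iab (q * q) 0 1).
Proof.
apply: abs_le_sqrt; rewrite ?Ipos //; apply: quad_cs; rewrite ?Ipos // => s t.
have := Ipos (s *: p + t *: q).
have -> : (s *: p + t *: q) * (s *: p + t *: q) =
   (s * s) *: (p * p) + (s * t) *: (p * q) + (s * t) *: (p * q) + (t * t) *: (q * q).
  by rewrite -!mul_polyC !polyCM; ring.
rewrite !IabD !IabZ => h; apply: (le_trans h); rewrite le_eqVlt; apply/orP; left.
by apply/eqP; ring.
Qed.

Lemma sum_cs k (a b : 'I_k -> R) :
  (\sum_(i < k) a i * b i) ^+ 2 <= (\sum_(i < k) a i ^+ 2) * (\sum_(i < k) b i ^+ 2).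
Proof.
apply: quad_cs; [by apply: sumr_ge0 => i _; rewrite sqr_ge0 | by apply: sumr_ge0 => i _; rewrite sqr_ge0 | move=> s t].
have : 0 <= \sum_(i < k) (s * a i + t * b i) ^+ 2 by rewrite sumr_ge0 // => i _; rewrite sqr_ge0.
have -> : \sum_(i < k) (s * a i + t * b i) ^+ 2 =
  \sum_(i < k) (s ^+ 2 * a i ^+ 2 + 2 * s * t * (a i * b i) + t ^+ 2 * b i ^+ 2).
  by apply: eq_bigr => i _; ring.
by rewrite !big_split /= -!mulr_sumr.
Qed.

Lemma quad_I k (a : 'I_k -> R) (F : 'I_k -> {poly R}) :
  Iab ((\sum_(i < k) a i *: F i) * (\sum_(j < k) a j *: F j)) 0 1 =
  \sum_(i < k) \sum_(j < k) a i * a j * Iab (F i * F j) 0 1.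
Proof.
rewrite mulr_suml Iab_sum; apply: eq_bigr => i _.
rewrite mulr_sumr Iab_sum; apply: eq_bigr => j _.
by rewrite -scalerAl -scalerAr !IabZ mulrA.
Qed.
End S_f.

Section S_g.
Variable R : realType.
Implicit Types p q : {poly R}.
Variable n : nat.
Variable x : 'I_n.+1 -> R.
Hypothesis hinc : forall i j : 'I_n.+1, (i < j)%N -> x i < x j.
Local Notation V := (bernVander x).
Local Notation I p := (Iab p 0 1).

Definition lpoly (j : 'I_n.+1) : {poly R} :=
  \prod_(i < n.+1 | i != j) ((x j - x i)^-1 *: ('X - (x i)%:P)).

Lemma lpolyE j t : (lpoly j).[t] = Defs.lagrange x j t.
Proof.
rewrite /lpoly /Defs.lagrange horner_prod; apply: eq_bigr => i _.
by rewrite hornerZ hornerXsubC mulrC.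
Qed.

Lemma size_lpoly j : (size (lpoly j) <= n.+1)%N.
Proof.
rewrite /lpoly scaler_prod; apply: (leq_trans (size_scale_leq _ _)).
have := @size_prodF R n x; rewrite (bigD1 j) //= size_monicM ?monicXsubC //.
  rewrite size_XsubC => h.
  have h2 : ((2 + size (\prod_(i < n.+1 | i != j) ('X - (x i)%:P))%R).-1 = n.+2)%N := h.
  by move: h2; rewrite !addSn add0n /= => -[->].
by rewrite monic_neq0 // monic_prod_XsubC.
Qed.

Lemma lpoly_node j k : (lpoly j).[x k] = (k == j)%:R.
Proof.
rewrite /lpoly horner_prod; case: (eqVneq k j) => [->|kj].
  rewrite big1 // => i ij; rewrite hornerZ hornerXsubC mulVf // subr_eq0.
  by apply/eqP => e; move: ij; rewrite (x_inj hinc e) eqxx.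
by rewrite (bigD1 k) //= hornerZ hornerXsubC subrr mulr0 mul0r.
Qed.

Definition qz (z : 'cV[R]_n.+1) : {poly R} := \sum_(j < n.+1) z j 0 *: lpoly j.

Lemma qz_node z k : (qz z).[x k] = z k 0.
Proof.
rewrite /qz horner_sum (bigD1 k) //= big1 ?addr0.
  by rewrite hornerZ lpoly_node eqxx mulr1.
by move=> i ik; rewrite hornerZ lpoly_node eq_sym (negbTE ik) mulr0.
Qed.

Lemma Vinv_pc z : pc (invmx V *m z) = qz z.
Proof.
apply: (@interp_uniq R n.+1 _ _ x (x_inj hinc) (size_pc _)).
  by apply: size_sum_le => i; apply: (leq_trans (size_scale_leq _ _)); exact: size_lpoly.
by move=> k; rewrite qz_node -V_mul mulKVmx // V_unit.
Qed.

Lemma massE (i j : nat) : int01 (fun t => bernstein n i t * bernstein n j t) = I (@bpoly R n i * @bpoly R n j).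
Proof.
rewrite -int01_poly; congr int01; apply: funext => t.
by rewrite hornerM !bpolyE.
Qed.

Lemma normM_pc (c : 'cV[R]_n.+1) : normM c = Num.sqrt (I (pc c * pc c)).
Proof.
rewrite /normM /pc quad_I; congr Num.sqrt.
rewrite !mxE [RHS]exchange_big /=; apply: eq_bigr => j _.
rewrite !mxE mulr_suml; apply: eq_bigr => i _.
by rewrite mulrAC; congr (_ * _); [rewrite mxE | rewrite mxE; exact: massE].
Qed.
End S_g.

Section S_h.
Variable R : realType.
Implicit Types p q : {poly R}.
Variable n : nat.
Variable x : 'I_n.+1 -> R.
Hypothesis hx0 : 0 <= x ord0.
Hypothesis hxn : x ord_max <= 1.
Hypothesis hinc : forall i j : 'I_n.+1, (i < j)%N -> x i < x j.
Local Notation V := (bernVander x).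
Local Notation I p := (Iab p 0 1).

Lemma x_in01 i : 0 <= x i <= 1.
Proof.
apply/andP; split.
  case: (ltnP 0 i) => h; first by apply: (le_trans hx0); apply/ltW/hinc.
  by have -> : i = ord0 by apply: val_inj => /=; lia.
case: (ltnP i n) => h; first by apply: (le_trans _ hxn); apply/ltW/hinc.
have -> : i = ord_max by apply: val_inj => /=; have := ltn_ord i; lia.
exact: hxn.
Qed.

Lemma boundA (c : 'cV[R]_n.+1) : norm2 (V *m c) <= Num.sqrt ((n.+1%:R) ^+ 3) * normM c.
Proof.
rewrite /norm2 normM_pc // -sqrtrM ?exprn_ge0 ?ler0n //; apply: ler_wsqrtr.
under eq_bigr => i _ do rewrite V_mul.
apply: (le_trans (ler_sum _ (fun i _ => pt_bound (Ipos (R:=R)) (size_pc c) (x_in01 i)))).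
rewrite sumr_const card_ord -(mulr_natr (n.+1%:R ^+ 2 * I (pc c * pc c)) n.+1) mulrAC -exprSr.
by [].
Qed.

Lemma wvecE j : (wvec x) j 0 = Num.sqrt (I (lpoly x j * lpoly x j)).
Proof.
rewrite mxE -int01_poly; congr (Num.sqrt (int01 _)); apply: funext => t.
by rewrite hornerM lpolyE expr2.
Qed.

Lemma boundB (z : 'cV[R]_n.+1) :
  normM (invmx V *m z) <= norm2 z * norm2 (wvec x).
Proof.
rewrite normM_pc // Vinv_pc // /qz quad_I /norm2 -sqrtrM; last first.
  by apply: sumr_ge0 => i _; rewrite sqr_ge0.
apply: ler_wsqrtr.
set w := fun i => Num.sqrt (I (lpoly x i * lpoly x i)).
apply: (@le_trans _ _ ((\sum_(i < n.+1) `|z i 0| * w i) ^+ 2)).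
  rewrite expr2 mulr_suml; apply: ler_sum => i _; rewrite mulr_sumr.
  apply: ler_sum => j _.
  apply: (le_trans (ler_norm _)); rewrite !normrM.
  have := I_cs (lpoly x i) (lpoly x j); rewrite -/(w i) -/(w j) => h.
  apply: (@le_trans _ _ (`|z i 0| * `|z j 0| * (w i * w j))).
    by apply: ler_wpM2l => //; rewrite mulr_ge0.
  by rewrite mulrACA.
apply: (le_trans (sum_cs _ _)).
apply: ler_pM.
- by apply: sumr_ge0 => i _; rewrite sqr_ge0.
- by apply: sumr_ge0 => i _; rewrite sqr_ge0.
- by apply/ler_sum => i _; rewrite real_normK ?num_real.
- by apply/ler_sum => i _; rewrite wvecE.
Qed.
End S_h.

Local Open Scope classical_set_scope.
Lemma sup_bound (R : realType) (S : set R) (B r0 : R) : S r0 -> 0 <= r0 ->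
  (forall r, S r -> r <= B) -> 0 <= sup S /\ sup S <= B.
Proof.
move=> Sr0 r00 hB; split.
  apply: (le_trans r00); apply: ub_le_sup => //; by exists B => r /hB.
by apply: ge_sup; [exists r0 | move=> r /hB].
Qed.

Lemma cst_neq0 (R : realType) n : (const_mx 1 : 'cV[R]_n.+1) != 0.
Proof.
apply/eqP => /matrixP /(_ ord0 ord0); rewrite !mxE => /eqP; by rewrite oner_eq0.
Qed.

Local Close Scope classical_set_scope.

Theorem theorem4p3 (R : realType) (n : nat) (x : 'I_n.+1 -> R)
  (hx0 : 0 <= x ord0) (hxn : x ord_max <= 1)
  (hinc : forall i j : 'I_n.+1, (i < j)%N -> x i < x j) :
  kappa_M2 (bernVander x)
    <= (n.+1)%:R `^ (3 / 2 : R) * norm2 (wvec x).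
Proof.
set B1 := Num.sqrt ((n.+1%:R : R) ^+ 3).
have pw : (n.+1)%:R `^ (3 / 2 : R) = B1.
  rewrite powRrM powR_mulrn ?ler0n //.
  by rewrite powR12_sqrt // exprn_ge0 // ler0n.
have nM0 (y : 'cV[R]_n.+1) : 0 <= normM y by apply: sqrtr_ge0.
have n20 (y : 'cV[R]_n.+1) : 0 <= norm2 y by apply: sqrtr_ge0.
rewrite pw /kappa_M2 /opnorm_M2 /opnorm_2M.
have [h1 h1'] : (0 <= sup [set r | exists y : 'cV[R]_n.+1, y != 0 /\ r = norm2 (bernVander x *m y) / normM y] /\
   sup [set r | exists y : 'cV[R]_n.+1, y != 0 /\ r = norm2 (bernVander x *m y) / normM y] <= B1)%classic.
  apply: (sup_bound (r0 := norm2 (bernVander x *m const_mx 1) / normM (const_mx 1))).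
- by exists (const_mx 1); split => //; exact: cst_neq0.
- by rewrite divr_ge0.
- move=> r [y [_ ->]].
  have [e|ne] := eqVneq (normM y) 0; first by rewrite e invr0 mulr0 sqrtr_ge0.
  have pos : 0 < normM y by rewrite lt_def ne nM0.
  by rewrite ler_pdivrMr //; exact: boundA.
have [h2 h2'] : (0 <= sup [set r | exists y : 'cV[R]_n.+1, y != 0 /\
     r = normM (invmx (bernVander x) *m y) / norm2 y] /\ sup [set r | exists y : 'cV[R]_n.+1, y != 0 /\
     r = normM (invmx (bernVander x) *m y) / norm2 y] <= norm2 (wvec x))%classic.
  apply: (sup_bound (r0 := normM (invmx (bernVander x) *m const_mx 1) / norm2 (const_mx 1))).
- by exists (const_mx 1); split => //; exact: cst_neq0.
- by rewrite divr_ge0.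
- move=> r [y [_ ->]].
  have [e|ne] := eqVneq (norm2 y) 0; first by rewrite e invr0 mulr0 sqrtr_ge0.
  have pos : 0 < norm2 y by rewrite lt_def ne n20.
  by rewrite ler_pdivrMr // mulrC; exact: boundB.
exact: ler_pM.
Qed.
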